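(* For every integer $r\ge 3$ and every integer $n>6^r$, $$g(r,n)\leq n-\frac{1}{12r}n^{\frac{r-1}{r}}.$$
   Context: A hypergraph is $r$-uniform if every edge contains exactly $r$ vertices. An $r$-uniform hypergraph is $r$-partite if its vertex set can be partitioned into $r$ sets $V_1,\dots,V_r$ such that every edge contains exactly one vertex from each $V_i$. A matching is a set of pairwise vertex-disjoint edges. Given a collection (repetitions allowed) of matchings $M_1,\dots,M_n$ in a hypergraph, a matching $M\subseteq \bigcup_{i=1}^n M_i$ is rainbow if there is an injection $\phi:M\to[n]$ such that every edge $e\in M$ belongs to $M_{\phi(e)}$. $g(r,n)$ denotes the largest integer $s$ such that every collection of $n$ matchings, each of size $n$, in an $r$-partite $r$-uniform hypergraph admits a rainbow matching of size $s$. *)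

(* Defs.v *)
From mathcomp Require Import all_boot.
From Stdlib Require Import ClassicalEpsilon.
Set Implicit Arguments. Unset Strict Implicit. Unset Printing Implicit Defensive.

Definition r_partite_uniform (r : nat) (V : finType) (H : {set {set V}}) : Prop :=
  (forall e, e \in H -> #|e| = r) /\
  exists part : V -> 'I_r,
    forall e, e \in H -> forall i : 'I_r, #|[set v in e | part v == i]| = 1.

Definition is_matching (V : finType) (M : {set {set V}}) : Prop :=
  forall e f, e \in M -> f \in M -> e != f -> [disjoint e & f].

Definition rainbow_matching (V : finType) (n : nat) (M : 'I_n -> {set {set V}})
    (R : {set {set V}}) : Prop :=
  R \subset \bigcup_(i < n) M i /\ is_matching R /\
  exists phi : {set V} -> 'I_n,
    {in R &, injective phi} /\ forall e, e \in R -> e \in M (phi e).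

Definition all_admit (r n s : nat) : Prop :=
  forall (V : finType) (H : {set {set V}}) (M : 'I_n -> {set {set V}}),
    r_partite_uniform r H ->
    (forall i, M i \subset H) ->
    (forall i, is_matching (M i)) ->
    (forall i, #|M i| = n) ->
    exists R : {set {set V}}, rainbow_matching M R /\ #|R| = s.

Definition pbool (P : Prop) : bool :=
  if excluded_middle_informative P then true else false.

(* A rainbow matching has
   at most n edges (injection into 'I_n), so for s > n all_admit r n s fails
   (vacuously witnessed for n = 0 too, as 'I_0 is empty); hence the maximum
   may be taken over s <= n.  all_admit r n 0 holds (R = set0). *)
Definition g (r n : nat) : nat := \max_(s < n.+1 | pbool (all_admit r n s)) s.

(* Main.v *)
Require Import Defs.
From mathcomp Require Import all_boot zify.
From Stdlib Require Import ClassicalEpsilon.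
Set Implicit Arguments. Unset Strict Implicit. Unset Printing Implicit Defensive.

Definition st (N m x c j : nat) : nat := (2^j * x + c %/ 2^(m - j)) %% N.
Definition cfun (N m x y : nat) : nat := (y + (N - (2^m * x) %% N)) %% N.

Lemma st0 N m x c : c < 2^m -> x < N -> st N m x c 0 = x.
Proof. by move=> hc hx; rewrite /st subn0 expn0 mul1n divn_small // addn0 modn_small. Qed.

Lemma stm N m x c : st N m x c m = (2^m * x + c) %% N.
Proof. by rewrite /st subnn expn0 divn1. Qed.

Lemma st_step N m x c j : j < m ->
  st N m x c j.+1 = (2 * st N m x c j + (c %/ 2^(m - j.+1)) %% 2) %% N.
Proof.
move=> hj; rewrite /st.
have -> : m - j = (m - j.+1).+1 by lia.
rewrite (expnSr 2 (m - j.+1)) divnMA.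
set q := c %/ 2 ^ (m - j.+1).
rewrite -[in RHS]modnDml modnMmr modnDml.
congr (_ %% N).
rewrite {1}(divn_eq q 2) expnS; lia.
Qed.

Lemma cfunP N m x y : 0 < N -> y < N -> (2^m * x + cfun N m x y) %% N = y.
Proof.
move=> hN hy; rewrite /cfun modnDmr.
have hr := ltn_pmod (2^m * x) hN.
rewrite {1}(divn_eq (2^m * x) N).
have -> : (2 ^ m * x) %/ N * N + (2 ^ m * x) %% N + (y + (N - (2 ^ m * x) %% N))
   = ((2 ^ m * x) %/ N).+1 * N + y by lia.
by rewrite modnMDl modn_small.
Qed.

Lemma cfun_lt N m x y : 0 < N -> cfun N m x y < N.
Proof. by move=> hN; rewrite /cfun ltn_pmod. Qed.

Lemma mod_cancel N k a b : coprime N k -> a < N -> b < N ->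
  (k * a) %% N = (k * b) %% N -> a = b.
Proof.
move=> hc ha hb /eqP.
wlog hab : a b ha hb / b <= a.
  move=> W; case: (leqP b a) => h; first exact: W.
  by rewrite eq_sym => /(W b a hb ha (ltnW h)) ->.
rewrite eqn_mod_dvd; last by rewrite leq_mul2l hab orbT.
rewrite -mulnBr Gauss_dvdr // => hd.
case: (posnP (a - b)) => h; first by lia.
have := dvdn_leq h hd; lia.
Qed.

Lemma exit_lemma (P : nat -> bool) m : P 0 -> ~~ P m -> exists j, j < m /\ P j /\ ~~ P j.+1.
Proof.
elim: m => [|m IH] h0 hm; first by rewrite h0 in hm.
case hPm: (P m).
  by exists m; split => //; split.
have [j [hj [h1 h2]]] := IH h0 (negbT hPm).
by exists j; split => //; lia.
Qed.

Definition p1 N' (y : 'I_N'.+1) : 'I_N'.+1 := inord ((y + 1) %% N'.+1).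
Definition p2 N' (y : 'I_N'.+1) : 'I_N'.+1 := inord ((2 * y) %% N'.+1).
Arguments p1 {N'} y.
Arguments p2 {N'} y.
Definition Uset N' (T : {set 'I_N'.+1}) := T :|: p1 @: T :|: p2 @: T.

Lemma st_cancel N m x x' c j : odd N -> x < N -> x' < N ->
  st N m x c j = st N m x' c j -> x = x'.
Proof.
move=> hN hx hx'; rewrite /st => /eqP; rewrite eqn_modDr => /eqP.
apply: mod_cancel => //.
by apply: coprimeXr; rewrite coprimen2.
Qed.

Lemma expansion N' m (T : {set 'I_N'.+1}) : 0 < m -> odd N'.+1 -> N'.+1 <= 2^m ->
  #|T| * (N'.+1 - #|T|) <= 2 * m * N'.+1 * #|Uset T :\: T|.
Proof.
move=> hm hodd hNm.
set N := N'.+1.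
have hN : 0 < N by [].
pose K := ('I_m * bool * 'I_N * 'I_N)%type.
pose good (xy : 'I_N * 'I_N) (k : K) : bool :=
  let: (j, kd, w, c) := k in
  [&& val c == cfun N m xy.1 xy.2, w \in Uset T :\: T &
      (if kd then val w == st N m xy.1 c j.+1
       else val w == (2 * st N m xy.1 c j) %% N)].
have j0 : 'I_m := @Ordinal m 0 hm.
pose f xy := odflt (j0, false, ord0, ord0) [pick k | good xy k].
have ex : forall xy, xy \in setX T (~: T) -> exists k, good xy k.
  case=> x y; rewrite inE /= inE => /andP [xT yT].
  pose c : 'I_N := Ordinal (cfun_lt m x y hN).
  have hc : c < 2^m by apply: leq_trans (ltn_ord c) hNm.
  pose P j := (inord (st N m x c j) : 'I_N) \in T.
  have P0 : P 0 by rewrite /P st0 // inord_val.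
  have Pm : ~~ P m by rewrite /P stm cfunP // inord_val.
  have [j [hj [hPj hPj1]]] := exit_lemma P0 Pm.
  have stlt : forall i, st N m x c i < N by move=> i; rewrite /st ltn_pmod.
  pose s : 'I_N := inord (st N m x c j).
  have hs : s \in T by [].
  case tT: (p2 s \in T).
    exists (@Ordinal m j hj, true, inord (st N m x c j.+1), c).
    rewrite /= eqxx /= inordK ?stlt // eqxx andbT.
    rewrite !inE hPj1 /=.
    have hb : (c %/ 2 ^ (m - j.+1)) %% 2 = 1.
      move: (@st_step N m x c j hj) => e.
      case hb: ((c %/ 2 ^ (m - j.+1)) %% 2) => [|b]; last first.
        have := ltn_pmod (c %/ 2 ^ (m - j.+1)) (isT : 0 < 2); rewrite hb; lia.
      exfalso; move: hPj1; rewrite /P e hb addn0.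
      suff -> : (inord ((2 * st N m x c j) %% N) : 'I_N) = p2 s by rewrite tT.
      by rewrite /p2 /s inordK ?stlt.
    apply/orP; left; apply/orP; right; apply/imsetP; exists (p2 s) => //.
    apply: val_inj; rewrite /p1 /p2 /s /= !inordK ?stlt ?ltn_pmod //.
    by rewrite st_step // hb modnDml.
  exists (@Ordinal m j hj, false, p2 s, c).
  rewrite /= eqxx /=.
  rewrite /p2 /s inordK ?stlt // inordK ?ltn_pmod // eqxx andbT.
  rewrite !inE.
  have -> : (inord ((2 * st N m x c j) %% N) : 'I_N) = p2 s by rewrite /p2 /s inordK ?stlt.
  rewrite tT /=; apply/orP; right; apply/imsetP; exists s => //.
have fgood : forall xy, xy \in setX T (~: T) -> good xy (f xy).
  move=> xy hxy; rewrite /f; case: pickP => [k hk //|H].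
  by have [k hk] := ex xy hxy; rewrite H in hk.
have finj : {in setX T (~: T) &, injective f}.
  move=> [x y] [x' y'] h h' e.
  have g := fgood _ h; have g' := fgood _ h'.
  move: g g'; rewrite e; case: (f (x', y')) => [[[j kd] w] c] /=.
  move=> /and3P [/eqP hc _ hw] /and3P [/eqP hc' _ hw'].
  have stlt : forall x c i, st N m x c i < N by move=> ? ? i; rewrite /st ltn_pmod.
  have hx : x = x'.
    case: kd hw hw' => /eqP hw /eqP hw'.
      apply: val_inj; apply: (@st_cancel N m x x' c j.+1) => //.
      by rewrite -hw -hw'.
    apply: val_inj; apply: (@st_cancel N m x x' c j) => //.
    apply: (@mod_cancel N 2) => //; first by rewrite coprimen2.
    by rewrite -hw -hw'.
  subst x'.
  have hy : y = y'.
    apply: val_inj.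
    have := @cfunP N m x y hN (ltn_ord y); have := @cfunP N m x y' hN (ltn_ord y').
    by rewrite -hc -hc' => e1 e2; apply: (etrans (esym e2)); exact: e1.
  by rewrite hy.
have fsub : f @: setX T (~: T) \subset
    setX (setX (setX [set: 'I_m] [set: bool]) (Uset T :\: T)) [set: 'I_N].
  apply/subsetP => k /imsetP [xy hxy ->].
  have := fgood _ hxy; case: (f xy) => [[[j kd] w] c] /= /and3P [_ hw _].
  rewrite !inE /=; rewrite !inE in hw; by rewrite hw.
have := subset_leq_card fsub.
rewrite card_in_imset // !cardsX !cardsT !card_ord card_bool.
have hC := cardsC T; rewrite card_ord in hC.
have -> : N - #|T| = #|~: T| by lia.
suff -> : 2 * m * N * #|Uset T :\: T| = m * 2 * #|Uset T :\: T| * N'.+1 by []. 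
rewrite /N; set e := #|Uset T :\: T|; set M := N'.+1; rewrite -!mulnA.
by rewrite mulnCA (mulnC M e).
Qed.

Definition Edge r N' (f : 'I_r -> nat) : {set 'I_r * 'I_N'.+2} :=
  [set (j, (inord (f j) : 'I_N'.+2)) | j : 'I_r].

Lemma Edge_mem r N' (f : 'I_r -> nat) v : (v \in Edge N' f) = (v.2 == inord (f v.1)).
Proof.
apply/imsetP/eqP => [[j _ ->] //|e]; exists v.1 => //.
by case: v e => a b /= ->.
Qed.

Lemma Edge_eq r N' (f g : 'I_r -> nat) : (forall j, f j <= N'.+1) -> (forall j, g j <= N'.+1) ->
  Edge N' f = Edge N' g -> forall j, f j = g j.
Proof.
move=> hf hg e j.
have : (j, (inord (f j) : 'I_N'.+2)) \in Edge N' g by rewrite -e Edge_mem.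
rewrite Edge_mem /= => /eqP /(congr1 (@nat_of_ord _)).
by rewrite !inordK // ltnS.
Qed.

Lemma Edge_disj r N' (f g : 'I_r -> nat) : (forall j, f j <= N'.+1) -> (forall j, g j <= N'.+1) ->
  (forall j, f j != g j) -> [disjoint Edge N' f & Edge N' g].
Proof.
move=> hf hg hne; apply/pred0P => v /=; apply/negbTE/negP => /andP [].
rewrite !Edge_mem => /eqP h1 /eqP; rewrite h1 => /(congr1 (@nat_of_ord _)).
rewrite !inordK ?ltnS // => e.
by have := hne v.1; rewrite e eqxx.
Qed.

Lemma Edge_card r N' (f : 'I_r -> nat) : #|Edge N' f| = r.
Proof.
rewrite /Edge card_imset ?card_ord //.
by move=> a b /(congr1 fst).
Qed.

Lemma Edge_part r N' (f : 'I_r -> nat) (i : 'I_r) :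
  #|[set v in Edge N' f | v.1 == i]| = 1.
Proof.
rewrite (_ : [set v in Edge N' f | v.1 == i] = [set (i, inord (f i))]) ?cards1 //.
apply/setP => v; rewrite !inE Edge_mem.
case: v => a b /=; apply/andP/eqP => [[/eqP -> /eqP ->] //|[-> ->]].
by rewrite !eqxx.
Qed.

Definition pos r N' (j : 'I_r) (x : nat) : nat :=
  if val j == 1 then (x + 1) %% N'.+1 else if val j == 2 then (2 * x) %% N'.+1 else x.

Definition Aedge r N' (x : nat) := Edge N' (fun _ : 'I_r => x).
Definition Bedge r N' (x : nat) := Edge N' (fun j : 'I_r => pos N' j x).
Definition Pedge r N' := Edge N' (fun _ : 'I_r => N'.+1).

Definition Aset r N' := [set Aedge r N' (val x) | x : 'I_N'.+1].
Definition Bset r N' := [set Bedge r N' (val x) | x : 'I_N'.+1].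
Definition Pset r N' (p : bool) : {set {set 'I_r * 'I_N'.+2}} := if p then [set Pedge r N'] else set0.

Definition Mfam r N' p a n (i : 'I_n) :=
  (if i < a then Aset r N' else Bset r N') :|: Pset r N' p.
Definition Hg r N' p := Aset r N' :|: Bset r N' :|: Pset r N' p.

Lemma pos_lt r N' (j : 'I_r) x : x < N'.+1 -> pos N' j x < N'.+1.
Proof. by rewrite /pos; case: ifP => _; [|case: ifP => _]; rewrite ?ltn_pmod. Qed.

Lemma pos_inj r N' (j : 'I_r) x y : odd N'.+1 -> x < N'.+1 -> y < N'.+1 ->
  pos N' j x = pos N' j y -> x = y.
Proof.
move=> ho hx hy; rewrite /pos; case: ifP => _.
  move/eqP; rewrite eqn_modDr !modn_small //; by move/eqP.
case: ifP => _ //.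
by apply: mod_cancel => //; rewrite coprimen2.
Qed.

Section Inst.
Variables (r N' : nat) (p : bool) (a : nat).
Hypothesis hr : 3 <= r.
Hypothesis hodd : odd N'.+1.
Hypothesis hN : 1 <= N'.

Let N := N'.+1.
Let j0 : 'I_r := @Ordinal r 0 (leq_trans (isT : 0 < 3) hr).
Let j1 : 'I_r := @Ordinal r 1 (leq_trans (isT : 1 < 3) hr).
Let j2 : 'I_r := @Ordinal r 2 hr.

Lemma A_disj (x y : 'I_N) : x != y -> [disjoint Aedge r N' x & Aedge r N' y].
Proof. move=> h; apply: Edge_disj => // j; exact: leqW (ltn_ord _). Qed.

Lemma B_disj (x y : 'I_N) : x != y -> [disjoint Bedge r N' x & Bedge r N' y].
Proof.
move=> h; apply: Edge_disj => [j|j|j]; first (by apply: leqW; apply: pos_lt);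
  first (by apply: leqW; apply: pos_lt).
apply/negP => /eqP e; have := pos_inj hodd (ltn_ord x) (ltn_ord y) e.
by move/ord_inj => e'; rewrite e' eqxx in h.
Qed.

Lemma AP_disj (x : 'I_N) : [disjoint Aedge r N' x & Pedge r N'].
Proof.
apply: Edge_disj => // j; [exact: leqW (ltn_ord _)| by rewrite neq_ltn ltn_ord].
Qed.

Lemma BP_disj (x : 'I_N) : [disjoint Bedge r N' x & Pedge r N'].
Proof.
apply: Edge_disj => // j; first by apply: leqW; apply: pos_lt.
by rewrite neq_ltn pos_lt.
Qed.

Lemma Bbound (x : 'I_N) (j : 'I_r) : pos N' j x <= N'.+1.
Proof. by apply: leqW; apply: pos_lt. Qed.

Lemma A_inj (x y : nat) : x <= N'.+1 -> y <= N'.+1 -> Aedge r N' x = Aedge r N' y -> x = y.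
Proof. move=> hx hy /Edge_eq H; exact: H j0. Qed.

Lemma B_inj (x y : 'I_N) : Bedge r N' x = Bedge r N' y -> x = y.
Proof.
move=> /Edge_eq H; apply: ord_inj.
have := H (Bbound x) (Bbound y) j0.
by rewrite /pos /=.
Qed.

Lemma AB_neq (x y : 'I_N) : Aedge r N' x != Bedge r N' y.
Proof.
apply/eqP => /Edge_eq H.
have h0 := H (fun _ => leqW (ltn_ord x)) (Bbound y) j0.
have h1 := H (fun _ => leqW (ltn_ord x)) (Bbound y) j1.
move: h0 h1; rewrite /pos /= => ->.
have := ltn_ord y; rewrite -/N => hy.
case: (ltnP (y.+1) N) => hl.
  rewrite modn_small //; lia.
have -> : y + 1 = N by lia.
rewrite modnn; lia.
Qed.

Lemma inA e : e \in Aset r N' -> exists x : 'I_N, e = Aedge r N' x.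
Proof. by case/imsetP => x _ ->; exists x. Qed.
Lemma inB e : e \in Bset r N' -> exists x : 'I_N, e = Bedge r N' x.
Proof. by case/imsetP => x _ ->; exists x. Qed.
Lemma inP e : e \in Pset r N' p -> e = Pedge r N' /\ p.
Proof. by rewrite /Pset; case: p; rewrite ?inE // => /eqP. Qed.

Lemma PA_neq (x : 'I_N) : Pedge r N' != Aedge r N' x.
Proof.
apply/eqP => /A_inj H; have := H (leqnn _) (leqW (ltn_ord x)).
by move=> e; have := ltn_ord x; rewrite -e /N ltnn.
Qed.

Lemma PB_neq (x : 'I_N) : Pedge r N' != Bedge r N' x.
Proof.
apply/eqP => /Edge_eq H; have := H (fun _ => leqnn _) (Bbound x) j0.
by rewrite /pos /= => e; have := ltn_ord x; rewrite -e /N ltnn.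
Qed.

Lemma A_notB e : e \in Aset r N' -> e \notin Bset r N'.
Proof.
case/inA => x ->; apply/negP => /inB [y ee]; by have := AB_neq x y; rewrite ee eqxx.
Qed.

Lemma A_notP e : e \in Aset r N' -> e \notin Pset r N' p.
Proof.
case/inA => x ->; apply/negP => /inP [ee _]; by have := PA_neq x; rewrite ee eqxx.
Qed.

Lemma B_notP e : e \in Bset r N' -> e \notin Pset r N' p.
Proof.
case/inB => x ->; apply/negP => /inP [ee _]; by have := PB_neq x; rewrite ee eqxx.
Qed.

Lemma M_match n (i : 'I_n) : is_matching (Mfam r N' p a i).
Proof.
move=> e f; rewrite /Mfam; case: ifP => _; rewrite !inE.
- case/orP => [/inA [x ->]|/inP [-> _]]; case/orP => [/inA [y ->]|/inP [-> _]] hne.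
  + apply: A_disj; apply: contra hne => /eqP -> //.
  + exact: AP_disj.
  + rewrite disjoint_sym; exact: AP_disj.
  + by rewrite eqxx in hne.
- case/orP => [/inB [x ->]|/inP [-> _]]; case/orP => [/inB [y ->]|/inP [-> _]] hne.
  + apply: B_disj; apply: contra hne => /eqP -> //.
  + exact: BP_disj.
  + rewrite disjoint_sym; exact: BP_disj.
  + by rewrite eqxx in hne.
Qed.

Lemma cardA : #|Aset r N'| = N.
Proof.
rewrite card_imset ?card_ord // => x y /A_inj H; apply: ord_inj; apply: H;
  exact: leqW (ltn_ord _).
Qed.

Lemma cardB : #|Bset r N'| = N.
Proof. by rewrite card_imset ?card_ord // => x y /B_inj. Qed.

Lemma cardP : #|Pset r N' p| = p.
Proof. by rewrite /Pset; case: p; rewrite ?cards1 ?cards0. Qed.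

Lemma M_card n (i : 'I_n) : #|Mfam r N' p a i| = N + p.
Proof.
rewrite /Mfam cardsU cardP; case: ifP => _.
  rewrite cardA; suff -> : Aset r N' :&: Pset r N' p = set0 by rewrite cards0 subn0.
  apply/setP => e; rewrite !inE; apply/negbTE/negP => /andP [he hp].
  by have := A_notP he; rewrite hp.
rewrite cardB; suff -> : Bset r N' :&: Pset r N' p = set0 by rewrite cards0 subn0.
apply/setP => e; rewrite !inE; apply/negbTE/negP => /andP [he hp].
by have := B_notP he; rewrite hp.
Qed.

Lemma M_sub n (i : 'I_n) : Mfam r N' p a i \subset Hg r N' p.
Proof.
rewrite /Mfam /Hg; case: ifP => _; apply/subsetP => e; rewrite !inE;
  case/orP => ->; rewrite ?orbT //.
Qed.

Lemma H_partite : r_partite_uniform r (Hg r N' p).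
Proof.
have H : forall e, e \in Hg r N' p -> exists f : 'I_r -> nat, e = Edge N' f.
  move=> e; rewrite !inE; case/orP; [case/orP|] => [/inA [x ->]|/inB [x ->]|/inP [-> _]];
  by eexists.
split.
  by move=> e /H [f ->]; rewrite Edge_card.
exists (fun v => v.1) => e /H [f ->] i; exact: Edge_part.
Qed.
End Inst.

Lemma card_lt_ord n a : a <= n -> #|[set i : 'I_n | i < a]| <= a.
Proof.
move=> h.
have -> : [set i : 'I_n | i < a] = [set widen_ord h j | j : 'I_a].
  apply/setP => i; rewrite !inE; apply/idP/imsetP => [hi|[j _ ->]] //=.
  by exists (Ordinal hi) => //; apply: val_inj.
by rewrite (leq_trans (leq_imset_card _ _)) // card_ord.
Qed.

Lemma card_ge_ord n a : a <= n -> #|[set i : 'I_n | a <= i]| <= n - a.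
Proof.
move=> h.
have hj : forall j : 'I_(n - a), j + a < n by move=> j; have := ltn_ord j; lia.
have -> : [set i : 'I_n | a <= i] = [set Ordinal (hj j) | j : 'I_(n - a)].
  apply/setP => i; rewrite !inE; apply/idP/imsetP => [hi|[j _ ->]] /=; last by lia.
  have hi' : i - a < n - a by have := ltn_ord i; lia.
  by exists (Ordinal hi') => //; apply: val_inj => /=; lia.
by rewrite (leq_trans (leq_imset_card _ _)) // card_ord.
Qed.

Section Bound.
Variables (r N' : nat) (p : bool) (a n : nat).
Hypothesis hr : 3 <= r.
Hypothesis hodd : odd N'.+1.
Hypothesis hN : 1 <= N'.
Hypothesis han : a <= n.

Let N := N'.+1.
Let j0 : 'I_r := @Ordinal r 0 (leq_trans (isT : 0 < 3) hr).
Let j1 : 'I_r := @Ordinal r 1 (leq_trans (isT : 1 < 3) hr).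
Let j2 : 'I_r := @Ordinal r 2 hr.

Lemma share (e f : {set 'I_r * 'I_N'.+2}) v : v \in e -> v \in f -> [disjoint e & f] -> False.
Proof. by move=> he hf /disjointFr /(_ he); rewrite hf. Qed.

Lemma rainbow_bound (R : {set {set 'I_r * 'I_N'.+2}}) :
  rainbow_matching (@Mfam r N' p a n) R ->
  exists T : {set 'I_N},
    [/\ #|T| <= n - a, #|R| <= p + a + #|T| & #|R| + #|Uset T :\: T| <= N + p].
Proof.
case=> Rsub [Rmatch [phi [phiinj phiM]]].
pose SA : {set 'I_N} := [set x : 'I_N | Aedge r N' x \in R].
pose TB : {set 'I_N} := [set x : 'I_N | Bedge r N' x \in R].
exists TB.
have RH : forall e, e \in R -> e \in Hg r N' p.
  move=> e he; have := subsetP Rsub e he; case/bigcupP => i _ hi.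
  exact: subsetP (M_sub r N' p a i) e hi.
have hR : #|R| <= #|SA| + #|TB| + p.
  have sub : R \subset (Aedge r N' \o val) @: SA :|: (Bedge r N' \o val) @: TB :|: Pset r N' p.
    apply/subsetP => e he; have := RH e he; rewrite !inE.
    case/orP; [case/orP|] => [/inA [x ex]|/inB [x ex]|->]; rewrite ?orbT //.
      by apply/orP; left; apply/orP; left; apply/imsetP; exists x; rewrite // inE -ex.
    by apply/orP; left; apply/orP; right; apply/imsetP; exists x; rewrite // inE -ex.
  apply: (leq_trans (subset_leq_card sub)).
  apply: (leq_trans (leq_card_setU _ _).1); rewrite cardP leq_add2r.
  apply: (leq_trans (leq_card_setU _ _).1); apply: leq_add; exact: leq_imset_card.
have hSA : #|SA| <= a.
  have sub : (fun x : 'I_N => phi (Aedge r N' x)) @: SA \subset [set i : 'I_n | i < a].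
    apply/subsetP => i /imsetP [x hx ->]; rewrite inE; rewrite /SA /TB inE in hx.
    have := phiM _ hx; rewrite /Mfam; case: ifP => // _.
    have hA : Aedge r N' x \in Aset r N' by apply/imsetP; exists x.
    rewrite inE => /orP [] h.
      by have := A_notB hr hodd hN hA; rewrite h.
    by have := A_notP p hr hA; rewrite h.
  rewrite -(card_in_imset (f := fun x : 'I_N => phi (Aedge r N' x))).
    exact: leq_trans (subset_leq_card sub) (card_lt_ord han).
  move=> x y; rewrite !inE => hx hy /(phiinj _ _ hx hy) e.
  have := A_inj hr (ltnW (ltn_ord x)) (ltnW (ltn_ord y)) e; exact: ord_inj.
have hTB : #|TB| <= n - a.
  have sub : (fun x : 'I_N => phi (Bedge r N' x)) @: TB \subset [set i : 'I_n | a <= i].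
    apply/subsetP => i /imsetP [x hx ->]; rewrite inE; rewrite /SA /TB inE in hx.
    have := phiM _ hx; rewrite /Mfam; case: ifP => [_|/negbT]; last by rewrite -leqNgt.
    have hB : Bedge r N' x \in Bset r N' by apply/imsetP; exists x.
    rewrite inE => /orP [] h.
      by have := A_notB hr hodd hN h; rewrite hB.
    by have := B_notP p hr hB; rewrite h.
  rewrite -(card_in_imset (f := fun x : 'I_N => phi (Bedge r N' x))).
    exact: leq_trans (subset_leq_card sub) (card_ge_ord han).
  by move=> x y; rewrite !inE => hx hy /(phiinj _ _ hx hy) /(B_inj hr).
have hdisj : SA :&: Uset TB = set0.
  apply/setP => x; rewrite !inE; apply/negbTE/negP => /andP [hx].
  case/orP; [case/orP|].
  - move=> hxT.
    have hne := AB_neq hr hodd hN x x.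
    have := Rmatch _ _ hx hxT hne.
    apply: (share (v := (j0, inord x))); rewrite Edge_mem //=.
  - case/imsetP => y hy ex; rewrite /TB inE in hy.
    have hne := AB_neq hr hodd hN x y.
    have := Rmatch _ _ hx hy hne.
    apply: (share (v := (j1, inord ((y + 1) %% N)))); rewrite Edge_mem //= ex /p1 inordK //.
    by rewrite ltn_pmod.
  - case/imsetP => y hy ex; rewrite /TB inE in hy.
    have hne := AB_neq hr hodd hN x y.
    have := Rmatch _ _ hx hy hne.
    apply: (share (v := (j2, inord ((2 * y) %% N)))); rewrite Edge_mem //= ex /p2 inordK //.
    by rewrite ltn_pmod.
have hU : #|SA| + #|Uset TB| <= N.
  have := subset_leq_card (subsetT (SA :|: Uset TB)); rewrite cardsT card_ord cardsU hdisj cards0; by rewrite subn0.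
have hTU : #|Uset TB :\: TB| = #|Uset TB| - #|TB|.
  have E : Uset TB :&: TB = TB.
    by apply/setIidPr; apply: subset_trans (subsetUl _ _) (subsetUl _ _).
  by rewrite cardsD E.
have hTBU : #|TB| <= #|Uset TB|.
  by apply: subset_leq_card; apply: subset_trans (subsetUl _ _) (subsetUl _ _).
split => //.
  move: hR hSA; generalize (nat_of_bool p) (#|SA|) (#|TB|) (#|R|) => q s t u; lia.
move: hR hU hTU hTBU; rewrite /N.
generalize (nat_of_bool p) (#|SA|) (#|TB|) (#|R|) (#|Uset TB|) (#|Uset TB :\: TB|) => q s t u v w; lia.
Qed.
End Bound.

Lemma admit_bound (r n N' m D : nat) (p : bool) :
  3 <= r -> odd N'.+1 -> 1 <= N' -> n = N'.+1 + p -> 0 < m -> N'.+1 <= 2^m ->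
  2 * m * N'.+1 * D <= (N'.+1 %/ 2 - D) * (N'.+1 %/ 2) ->
  forall s, all_admit r n s -> s <= n - D.
Proof.
move=> hr hodd hN hn hm hNm hD s hs.
set N := N'.+1 in hodd hn hNm hD *.
set b := N %/ 2 in hD.
have hb : N = b.*2 + 1.
  by rewrite /b {1}(divn_eq N 2) modn2 hodd muln2.
pose a := n - b.
have hab : a <= n by rewrite /a leq_subr.
have [R [hR hRs]] := hs _ (Hg r N' p) (@Mfam r N' p a n) (H_partite r N' p)
  (M_sub r N' p a (n:=n)) (fun i => M_match hodd (i:=i))
  (fun i => etrans (M_card N' p a hr i) (esym hn)).
have [T [hT1 hT2 hT3]] := rainbow_bound hr hodd hN hab hR.
have hexp := expansion T hm hodd hNm.
rewrite -hRs.
set t := #|T| in hT1 hT2 hexp.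
set e := #|Uset T :\: T| in hT3 hexp.
have hbn : b <= n by rewrite hn; lia.
case: (leqP (t + p + D) b) => h1.
  move: hT2 h1; rewrite /a; generalize (nat_of_bool p) => q; lia.
have htb : b - D <= t by move: h1 (leq_b1 p); generalize (nat_of_bool p) => q; lia.
have ht : t <= b by move: hT1; rewrite /a; lia.
have h2 : (b - D) * b <= t * (N - t).
  apply: leq_mul => //; rewrite hb; lia.
have hDe : D <= e.
  have h3 := leq_trans hD (leq_trans h2 hexp).
  rewrite leq_pmul2l // in h3.
  by rewrite !muln_gt0 hm.
move: hT3; rewrite hn; generalize (nat_of_bool p) => q; lia.
Qed.

Lemma root_exists r n : 0 < r -> 6 ^ r <= n ->
  exists K, [/\ 6 <= K, K ^ r <= n & n < K.+1 ^ r].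
Proof.
move=> hr hn.
have ex : exists k, (fun k => k ^ r <= n) k by exists 6.
have ub : forall k, (fun k => k ^ r <= n) k -> k <= n.
  move=> k /= hk; apply: leq_trans hk.
  case: k => // k; rewrite -{1}(expn1 k.+1) leq_pexp2l //.
case: (ex_maxnP ex ub) => K hK hmax.
exists K; split => //.
  exact: hmax.
rewrite ltnNge; apply/negP => h; have := hmax _ h; lia.
Qed.

Lemma sq_le_pow2 K : 6 <= K -> K.+1 ^ 2 <= 2 ^ K.
Proof.
elim: K => // K IH hK.
case: (ltngtP K 6) => h.
- by have -> : K = 5 by lia.
- rewrite expnS; have := IH (ltnW h); rewrite !expnS !expn0; nia.
- by subst K.
Qed.

Lemma pow_lb K r : 6 <= K -> 3 <= r -> 5 * K * r + 11 <= K ^ r.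
Proof.
move=> hK; elim: r => // r IH hr.
case: (ltngtP r 3) => h.
- have -> : r = 2 by lia.
  rewrite !expnS expn0; nia.
- rewrite expnS; have := IH (ltnW h); nia.
- by subst r; have := IH (leqnn 3); rewrite !expnS expn0; nia.
Qed.

Lemma main_nat r n : 3 <= r -> 6 ^ r < n ->
  exists D K, [/\ g r n <= n - D, n <= 12 * r * K * D, K ^ r <= n, 0 < K & D <= n].
Proof.
move=> hr hn.
have [K [hK6 hKn hnK]] := root_exists (ltnW (ltnW hr)) (ltnW hn).
have h6 : 216 <= 6 ^ r.
  rewrite -(subnK hr) expnD.
  have : 1 <= 6 ^ (r - 3) by rewrite expn_gt0.
  rewrite (_ : 6 ^ 3 = 216) //; nia.
pose N' := if odd n then n.-1 else n.-2.
pose p := ~~ odd n.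
have hn' : n = N'.+1 + p by rewrite /N' /p; case: ifP => ho /=; lia.
have hodd : odd N'.+1.
  rewrite /N'; case: ifP => ho; first by rewrite prednK //; lia.
  have h2 : 2 <= n by lia.
  have e : n = n.-2.+1 + 1 by lia.
  by move: ho; rewrite {1}e oddD addbT => /negbFE.
have hN : 1 <= N' by rewrite /N'; case: ifP; lia.
set N := N'.+1 in hn' hodd.
pose m := (K * r)./2.+1.
have hm : 0 < m by [].
have hm10 : 10 <= m.
  rewrite /m; have : 18 <= K * r by nia.
  lia.
have hNm : N <= 2 ^ m.
  have h1 : N < K.+1 ^ r by lia.
  suff : K.+1 ^ r <= 2 ^ m by lia.
  rewrite -(@leq_exp2r _ _ 2) // -!expnM (mulnC r 2) expnM.
  apply: leq_trans (_ : 2 ^ (K * r) <= _).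
    by rewrite expnM leq_exp2r ?sq_le_pow2 //; lia.
  rewrite leq_pexp2l //; rewrite /m; lia.
pose D := N %/ (10 * m).
have hDN : D * (10 * m) <= N by rewrite leq_trunc_div.
have hND : N < (D.+1) * (10 * m) by rewrite ltn_ceil // muln_gt0.
have hNbig : 10 * m <= N.
  have := pow_lb hK6 hr; rewrite /m; lia.
have hD1 : 1 <= D by rewrite /D divn_gt0 ?muln_gt0.
have hb : N = (N %/ 2).*2 + 1.
  by rewrite {1}(divn_eq N 2) modn2 hodd muln2.
have hcond : 2 * m * N * D <= (N %/ 2 - D) * (N %/ 2).
  set b := N %/ 2 in hb *.
  have hb5 : 100 <= b by lia.
  have hD100 : 100 * D <= N by nia.
  have hDb : D <= b by lia.
  nia.
exists D, K; split => //.
- apply/bigmax_leqP => s.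
  rewrite /pbool; case: excluded_middle_informative => // H' _.
  exact: (@admit_bound r n N' m D p hr hodd hN hn' hm hNm hcond s H').
- have : 2 * (m - 1) <= K * r by rewrite /m; lia.
  nia.
- lia.
- nia.
Qed.

Unset Implicit Arguments.
From Stdlib Require Import Reals Lra Psatz.
Open Scope R_scope.

Lemma INR_expn (a b : nat) : INR (expn a b) = INR a ^ b.
Proof.
elim: b => [|b IH]; first by rewrite expn0.
by rewrite expnS mult_INR IH.
Qed.

Lemma rpow_bound (n K r : nat) : (0 < K)%nat -> (expn K r <= n)%nat -> (0 < r)%nat ->
  Rpower (INR n) ((INR r - 1) / INR r) * INR K <= INR n.
Proof.
move=> hK hKn hr.
have Kpos : 0 < INR K by apply: lt_0_INR; apply/ltP.
have rpos : 0 < INR r by apply: lt_0_INR; apply/ltP.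
have hKn' : INR K ^ r <= INR n by rewrite -INR_expn; apply: le_INR; apply/leP.
have npos : 0 < INR n by apply: Rlt_le_trans (pow_lt _ _ Kpos) hKn'.
have h1 : INR K <= Rpower (INR n) (/ INR r).
  have -> : INR K = Rpower (Rpower (INR K) (INR r)) (/ INR r).
    rewrite Rpower_mult Rinv_r; last by apply: Rgt_not_eq.
    by rewrite Rpower_1.
  apply: Rle_Rpower_l; first by left; apply: Rinv_0_lt_compat.
  split; first by apply: exp_pos.
  by rewrite Rpower_pow.
have h2 : 0 <= Rpower (INR n) ((INR r - 1) / INR r) by left; apply: exp_pos.
apply: Rle_trans (Rmult_le_compat_l _ _ _ h2 h1) _.
rewrite -Rpower_plus.
have -> : (INR r - 1) / INR r + / INR r = 1 by field; apply: Rgt_not_eq.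
by rewrite Rpower_1; [apply: Rle_refl|].
Qed.

Lemma pow_expn (a b : nat) : Nat.pow a b = expn a b.
Proof.
elim: b => [|b IH] //=.
by rewrite expnS IH.
Qed.

Theorem theorem1p7 (r n : nat) :
  (3 <= r)%nat -> (6 ^ r < n)%nat ->
  INR (g r n) <= INR n - / (12 * INR r) * Rpower (INR n) ((INR r - 1) / INR r).
Proof.
move=> hr hn.
have [D [K [hg hnD hKn hK hDn]]] := main_nat hr (eq_ind _ (fun x => is_true (x < n)%nat) hn _ (pow_expn 6 r)).
have rpos : 0 < INR r by apply: lt_0_INR; apply/ltP; apply: leq_trans hr.
have Kpos : 0 < INR K by apply: lt_0_INR; apply/ltP.
have hrp := @rpow_bound n K r hK hKn (leq_trans (isT : (0 < 3)%nat) hr).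
have e1 : INR (g r n) <= INR n - INR D.
  rewrite -minus_INR; last by apply/leP.
  by apply: le_INR; apply/leP.
have e2 : INR n <= 12 * INR r * INR K * INR D.
  have := le_INR _ _ (elimT leP hnD); rewrite !mult_INR.
  by rewrite (_ : INR 12 = 12) //; simpl; lra.
apply: Rle_trans e1 _.
apply: Rplus_le_compat_l; apply: Ropp_le_contravar.
set P := Rpower _ _ in hrp *.
have hP : P <= 12 * INR r * INR D.
  apply: (Rmult_le_reg_r (INR K)) => //.
  apply: Rle_trans hrp _. nra.
have -> : INR D = / (12 * INR r) * (12 * INR r * INR D) by field; lra.
apply: Rmult_le_compat_l => //.
left; apply: Rinv_0_lt_compat; lra.
Qed.
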